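(* For every integer $t\ge 2$, Waiter wins the $(1:1)$ Client-Waiter vertex $K_3$-game played on the graph $DD_t$.
   Context: For $t\ge 2$, $DD_t$ is the graph obtained as follows: take triangles $a_ib_ic_i$ for $i=1,\dots,t$ on vertices where $c_i=a_{i+1}$ for $1\le i<t$ and all other listed vertices are distinct (a chain of $t$ triangles, consecutive ones sharing exactly one vertex, nonconsecutive ones disjoint), and add two new vertices $x,y$ together with the triangles $a_1c_1y$ and $a_tc_tx$ (i.e., edges $ya_1,yc_1,xa_t,xc_t$). The $(1:1)$ Client-Waiter vertex $K_3$-game on a graph: in each round Waiter offers one or two unclaimed vertices, Client claims one and Waiter the other (if any); Client wins if the subgraph induced by his vertices contains a triangle, otherwise Waiter wins. *)

(* Defs.v *)
From mathcomp Require Import all_boot.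
Set Implicit Arguments. Unset Strict Implicit. Unset Printing Implicit Defensive.

Definition has_triangle (V : finType) (e : rel V) (C : {set V}) : bool :=
  [exists u : V, exists v : V, exists w : V,
    [&& u \in C, v \in C, w \in C, u != v, v != w, u != w,
        e u v, e v w & e u w]].

(* Since the game is
   finite, the inductive predicate is exactly the existence of a winning
   strategy for Waiter. *)
Inductive waiter_wins (V : finType) (e : rel V) : {set V} -> {set V} -> Prop :=
| ww_end C W :
    (forall v : V, v \in C :|: W) -> ~~ has_triangle e C -> waiter_wins e C W
| ww_one C W u :
    u \notin C :|: W -> waiter_wins e (u |: C) W -> waiter_wins e C W
| ww_two C W u v :
    u != v -> u \notin C :|: W -> v \notin C :|: W ->
    waiter_wins e (u |: C) (v |: W) -> waiter_wins e (v |: C) (u |: W) ->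
    waiter_wins e C W.

Definition waiter_wins_game (V : finType) (e : rel V) : Prop :=
  waiter_wins e set0 set0.

(** Encoding (0-based k = 0..t-1 for triangle number k+1):
     a_{k+1} = k  (k = 0..t, with c_{k+1} = a_{k+2} = k+1, c_t = t),
     b_{k+1} = t+1+k  (k = 0..t-1),
     x = 2t+1,  y = 2t+2.
   Edges: for each k < t the triangle {k, k+1, t+1+k};
   y adjacent to a_1 = 0 and c_1 = 1;  x adjacent to a_t = t-1 and c_t = t. *)
Definition dd_base (t u v : nat) : bool :=
  [exists k : 'I_t,
     [|| (u == k) && (v == k.+1),
         (u == k) && (v == t.+1 + k) |
         (u == k.+1) && (v == t.+1 + k)]]
  || [|| (u == 0) && (v == (2 * t).+2),
         (u == 1) && (v == (2 * t).+2),
         (u == t.-1) && (v == (2 * t).+1) |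
         (u == t) && (v == (2 * t).+1)].

Definition dd_adj (t : nat) : rel 'I_((2 * t).+3) :=
  fun u v => dd_base t u v || dd_base t v u.
Arguments dd_adj t : clear implicits.

(* Main.v *)
Require Import Defs.
From mathcomp Require Import all_boot zify.
Set Implicit Arguments. Unset Strict Implicit.

Section Gen.
Variables (V : finType) (e : rel V).

Lemma no_tri (C W : {set V}) : (forall x, x \in C -> x \notin W) ->
  (forall u v w, u != v -> v != w -> u != w -> e u v -> e v w -> e u w ->
     [|| u \in W, v \in W | w \in W]) -> ~~ has_triangle e C.
Proof.
move=> hd htri.
apply/negP=> /existsP [u /existsP [v /existsP [w /and4P [uC vC wC /and4P [h1 h2 h3 /and3P [h4 h5 h6]]]]]].
have := htri u v w h1 h2 h3 h4 h5 h6.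
by rewrite (negbTE (hd _ uC)) (negbTE (hd _ vC)) (negbTE (hd _ wC)).
Qed.

Lemma fill_win : forall n (C W : {set V}), #|~: (C :|: W)| <= n ->
  (forall x, x \in C -> x \notin W) ->
  (forall u v w, u != v -> v != w -> u != w -> e u v -> e v w -> e u w ->
     [|| u \in W, v \in W | w \in W]) ->
  waiter_wins e C W.
Proof.
elim=> [|n IH] C W hn hd htri.
- apply: ww_end; [|exact: (no_tri hd htri)].
  move=> v; case hv: (v \in C :|: W) => //.
  have : 0 < #|~: (C :|: W)| by apply/card_gt0P; exists v; rewrite inE hv.
  by rewrite lt0n; move: hn; rewrite leqn0 => ->.
- case: (pickP [pred x | x \notin C :|: W]) => [u /= hu|hnone].
  + apply: (@ww_one _ _ _ _ u hu); apply: IH => //.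
    * have hp : ~: (u |: C :|: W) \proper ~: (C :|: W).
        rewrite properC; apply/properP; split; first by apply/subsetP=> x; rewrite !inE; case/orP=> ->; rewrite ?orbT.
        by exists u; [rewrite !inE eqxx | exact: hu].
      by have := proper_card hp; lia.
    * move=> x; rewrite !inE => /orP [/eqP -> | xC].
        + by apply/negP=> uW; move: hu; rewrite inE uW orbT.
        + exact: (hd _ xC).
  + apply: ww_end; [|exact: (no_tri hd htri)].
    by move=> v; have := hnone v; rewrite /= => /negbFE.
Qed.

Definition tri3 (u v w : V) := [:: u; v; w].

Lemma pair_win (m : V -> V) : forall n (A C W : {set V}), #|A| <= n ->
  (forall x, x \in C -> x \notin W) ->
  (forall a, a \in A -> (a \notin C) && (a \notin W)) ->
  (forall a, a \in A -> [/\ m a \in A, m a != a & m (m a) = a]) ->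
  (forall u v w, u != v -> v != w -> u != w -> e u v -> e v w -> e u w ->
     u \notin W -> v \notin W -> w \notin W ->
     exists a, [/\ a \in A, a \in tri3 u v w & m a \in tri3 u v w]) ->
  waiter_wins e C W.
Proof.
elim=> [|n IH] A C W hn hd hA hm htri.
- apply: (@fill_win #|~: (C :|: W)|) => // u v w h1 h2 h3 h4 h5 h6.
  case: (boolP (u \in W)) => // hu; case: (boolP (v \in W)) => // hv;
  case: (boolP (w \in W)) => // hw.
  have [a [aA _ _]] := htri u v w h1 h2 h3 h4 h5 h6 hu hv hw.
  by move: hn; rewrite leqn0 => /eqP/cards0_eq hA0; move: aA; rewrite hA0 inE.
- case: (set_0Vmem A) => [hA0|[a aA]].
  + apply: (IH A) => //; by rewrite hA0 cards0.
  + have [mA mna mma] := hm a aA.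
    set b := m a.
    have hab : a != b by rewrite eq_sym.
    have /andP [aC aW] := hA a aA.
    have /andP [bC bW] := hA b mA.
    pose A' := A :\ a :\ b.
    have hcard : #|A'| <= n.
      have : #|A'| < #|A|.
        apply: proper_card; apply/properP; split.
          by apply/subsetP=> x; rewrite !inE => /andP [_ /andP [_ ->]].
        by exists a => //; rewrite !inE eqxx andbF.
      by lia.
    have branch : forall p q, (p = a /\ q = b) \/ (p = b /\ q = a) ->
        waiter_wins e (p |: C) (q |: W).
      move=> p q hpq.
      have pq : p != q by case: hpq => [[-> ->]|[-> ->]] //; rewrite eq_sym.
      have pA : p \in A by case: hpq => [[-> _]|[-> _]].
      have qA : q \in A by case: hpq => [[_ ->]|[_ ->]].
      have /andP [pC pW] := hA p pA.
      have /andP [qC qW] := hA q qA.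
      apply: (IH A') => //.
      * move=> x; rewrite !inE => /orP [/eqP ->|xC].
          by rewrite negb_or pW pq.
        rewrite negb_or (hd _ xC) andbT; apply/eqP=> xq; move: qC; by rewrite -xq xC.
      * move=> x; rewrite !inE => /and3P [xb xa xA].
        have /andP [xC xW] := hA x xA.
        rewrite !negb_or xC xW !andbT.
        by case: hpq => [[-> ->]|[-> ->]]; rewrite ?xa ?xb.
      * move=> x; rewrite !inE => /and3P [xb xa xA].
        have [mxA mxx mmx] := hm x xA.
        rewrite mxA mxx andbT; split => //; apply/andP; split.
          apply/eqP=> mxb; move/eqP: xa; apply; by rewrite -mmx mxb mma.
        apply/eqP=> mxa; move/eqP: xb; apply; by rewrite -mmx mxa.
      * move=> u v w h1 h2 h3 h4 h5 h6; rewrite !inE !negb_or.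
        move=> /andP [uq uW] /andP [vq vW] /andP [wq wW].
        have [c [cA cT mcT]] := htri u v w h1 h2 h3 h4 h5 h6 uW vW wW.
        have qT : q \notin tri3 u v w by rewrite !inE !negb_or eq_sym uq eq_sym vq eq_sym wq.
        have aT : (a \notin tri3 u v w) || (b \notin tri3 u v w).
          by case: hpq => [[_ <-]|[_ <-]]; rewrite qT ?orbT.
        exists c; split => //.
        rewrite !inE cA andbT; apply/andP; split.
          apply/eqP=> cb; have mca : m c = a by rewrite cb /b mma.
          by move: aT; rewrite -mca mcT -cb cT.
        apply/eqP=> ca; have mcb : m c = b by rewrite ca.
        by move: aT; rewrite -mcb mcT -ca cT.
    apply: (@ww_two _ _ _ _ a b hab).
    * by rewrite inE negb_or aC aW.
    * by rewrite inE negb_or bC bW.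
    * by apply: branch; left.
    * by apply: branch; right.
Qed.
End Gen.

Definition adjn t u v := dd_base t u v || dd_base t v u.

Definition basep t k u v :=
  (k < t /\ ((u = k /\ v = k.+1) \/ (u = k /\ v = t.+1 + k) \/ (u = k.+1 /\ v = t.+1 + k)))
  \/ (u = 0 /\ v = (2 * t).+2) \/ (u = 1 /\ v = (2 * t).+2)
  \/ (u = t.-1 /\ v = (2 * t).+1) \/ (u = t /\ v = (2 * t).+1).

Lemma base_ex t u v : dd_base t u v -> exists k, basep t k u v.
Proof.
rewrite /dd_base /basep => /orP [/existsP [k hk]| h].
- exists k; have := ltn_ord k; move: hk; lia.
- exists 0; move: h; lia.
Qed.

Lemma adj_ex t u v : adjn t u v -> exists k, basep t k u v \/ basep t k v u.
Proof.
by case/orP=> /base_ex [k hk]; exists k; [left|right].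
Qed.

Definition ordp t a b :=
  (b = a.+1 /\ b <= t) \/ (a < t /\ b = t.+1 + a) \/ (1 <= a <= t /\ b = t + a)
  \/ (a <= 1 /\ b = (2 * t).+2) \/ (t.-1 <= a <= t /\ b = (2 * t).+1).

Lemma ord_adj t a b : 2 <= t -> a < b -> adjn t a b -> ordp t a b.
Proof.
move=> ht ab /adj_ex [k [h|h]]; move: h; rewrite /basep /ordp; lia.
Qed.

Lemma dd_shape t u v w : 2 <= t -> u < v -> v < w -> w < (2 * t).+3 ->
  adjn t u v -> adjn t v w -> adjn t u w ->
  v = u.+1 /\ u < t /\ (w = t.+1 + u \/ (u = 0 /\ w = (2 * t).+2) \/ (u.+1 = t /\ w = (2 * t).+1)).
Proof.
move=> ht uv vw wn h1 h2 h3.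
have := ord_adj ht uv h1; have := ord_adj ht vw h2; have := ord_adj ht (ltn_trans uv vw) h3.
rewrite /ordp.
case=> [?|[?|[?|[?|?]]]]; case=> [?|[?|[?|[?|?]]]]; case=> [?|[?|[?|[?|?]]]]; lia.
Qed.

Definition m1n t u := if u == 0 then 1 else if u == 1 then 0 else if u <= t then u + t else u - t.
Definition A1n t u := (u <= t) || ((t.+2 <= u) && (u <= 2 * t)).
Definition m2n t u := if u == 0 then (2 * t).+2 else if u == (2 * t).+2 then 0
  else if u == t.-1 then t else if u == t then t.-1 else if u <= t then u + t.+1 else u - t.+1.
Definition A2n t u := [|| u <= t, (t.+2 <= u) && (u <= (2 * t).-1) | u == (2 * t).+2].

Lemma inv1 t a : 2 <= t -> A1n t a ->
  [/\ A1n t (m1n t a), m1n t a != a, m1n t (m1n t a) = a & m1n t a < (2 * t).+3].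
Proof.
rewrite /A1n /m1n => ht ha; do ! (case: ifP => /=); intros; split; lia.
Qed.

Lemma inv2 t a : 2 <= t -> A2n t a ->
  [/\ A2n t (m2n t a), m2n t a != a, m2n t (m2n t a) = a & m2n t a < (2 * t).+3].
Proof.
rewrite /A2n /m2n => ht ha; do ! (case: ifP => /=); intros; split; lia.
Qed.

Definition Qn (A : nat -> bool) (m : nat -> nat) (u v w : nat) :=
  exists a, A a /\ (a = u \/ a = v \/ a = w) /\ (m a = u \/ m a = v \/ m a = w).

Lemma adjnC t u v : adjn t u v = adjn t v u.
Proof. by rewrite /adjn orbC. Qed.

Lemma tri_gen t (A : nat -> bool) (m : nat -> nat) X :
  (forall u v w, u < v -> v < w -> w < (2 * t).+3 ->
     adjn t u v -> adjn t v w -> adjn t u w -> u != X -> v != X -> w != X -> Qn A m u v w) ->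
  forall u v w, u != v -> v != w -> u != w -> u < (2 * t).+3 -> v < (2 * t).+3 -> w < (2 * t).+3 ->
     adjn t u v -> adjn t v w -> adjn t u w -> u != X -> v != X -> w != X -> Qn A m u v w.
Proof.
move=> H u v w h1 h2 h3 hu hv hw a1 a2 a3 x1 x2 x3.
rewrite adjnC in a1; rewrite adjnC in a2; rewrite adjnC in a3.
have b1 := a1; have b2 := a2; have b3 := a3.
rewrite adjnC in b1; rewrite adjnC in b2; rewrite adjnC in b3.
case: (ltngtP u v) => [uv|vu|e]; last by rewrite e eqxx in h1.
all: case: (ltngtP v w) => [vw|wv|e]; last by rewrite e eqxx in h2.
all: case: (ltngtP u w) => [uw|wu|e]; last by rewrite e eqxx in h3.
all: try lia.
- have [a [? [? ?]]] := H u v w uv vw hw b1 b2 b3 x1 x2 x3; exists a; tauto.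
- have [a [? [? ?]]] := H u w v uw wv hv b3 a2 b1 x1 x3 x2; exists a; tauto.
- have [a [? [? ?]]] := H w u v wu uv hv a3 b1 a2 x3 x1 x2; exists a; tauto.
- have [a [? [? ?]]] := H v u w vu uw hw a1 b3 b2 x2 x1 x3; exists a; tauto.
- have [a [? [? ?]]] := H v w u vw wu hu b2 a3 a1 x2 x3 x1; exists a; tauto.
- have [a [? [? ?]]] := H w v u wv vu hu a2 a1 a3 x3 x2 x1; exists a; tauto.
Qed.

Lemma tri1_sorted t : 2 <= t -> forall u v w, u < v -> v < w -> w < (2 * t).+3 ->
  adjn t u v -> adjn t v w -> adjn t u w -> u != (2 * t).+1 -> v != (2 * t).+1 -> w != (2 * t).+1 ->
  Qn (A1n t) (m1n t) u v w.
Proof.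
move=> ht u v w uv vw wn a1 a2 a3 x1 x2 x3.
have [ev [ut hw]] := dd_shape ht uv vw wn a1 a2 a3.
case: (eqVneq u 0) => [u0|u0].
- exists 0; rewrite /A1n /m1n /=; lia.
- exists v; rewrite /A1n /m1n; do ! (case: ifP => /=); intros; lia.
Qed.

Lemma tri2_sorted t : 2 <= t -> forall u v w, u < v -> v < w -> w < (2 * t).+3 ->
  adjn t u v -> adjn t v w -> adjn t u w -> u != t.+1 -> v != t.+1 -> w != t.+1 ->
  Qn (A2n t) (m2n t) u v w.
Proof.
move=> ht u v w uv vw wn a1 a2 a3 x1 x2 x3.
have [ev [ut hw]] := dd_shape ht uv vw wn a1 a2 a3.
case: (eqVneq u t.-1) => [ut1|ut1].
- exists u; rewrite /A2n /m2n; do ! (case: ifP => /=); intros; lia.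
case: (eqVneq u 0) => [u0|u0].
- exists 0; rewrite /A2n /m2n /=; lia.
- exists u; rewrite /A2n /m2n; do ! (case: ifP => /=); intros; lia.
Qed.

Lemma vi t k : k < (2 * t).+3 -> nat_of_ord (inord k : 'I_((2 * t).+3)) = k.
Proof. by move=> h; rewrite inordK. Qed.

Lemma branch_gen t (An : nat -> bool) (mn : nat -> nat) (c x : nat) :
  c < (2 * t).+3 -> x < (2 * t).+3 -> c != x ->
  (forall a, An a -> a != c /\ a != x) ->
  (forall a, a < (2 * t).+3 -> An a -> [/\ An (mn a), mn a != a, mn (mn a) = a & mn a < (2 * t).+3]) ->
  (forall u v w, u != v -> v != w -> u != w -> u < (2 * t).+3 -> v < (2 * t).+3 -> w < (2 * t).+3 ->
     adjn t u v -> adjn t v w -> adjn t u w -> u != x -> v != x -> w != x -> Qn An mn u v w) ->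
  waiter_wins (dd_adj t) ((inord c : 'I_((2 * t).+3)) |: set0) ((inord x : 'I_((2 * t).+3)) |: set0).
Proof.
move=> hc hx cx hA hinv htri.
pose A := [set u : 'I_((2 * t).+3) | An u].
pose m := fun u : 'I_((2 * t).+3) => (inord (mn u) : 'I_((2 * t).+3)).
apply: (@pair_win _ _ m #|A| A) => //.
- move=> y; rewrite !inE orbF => /eqP ->; rewrite orbF -(inj_eq val_inj) /= !vi //.
- move=> a; rewrite inE => /hA [ac ax]; rewrite !inE !orbF; apply/andP; split;
  rewrite -(inj_eq val_inj) /= vi //.
- move=> a; rewrite inE => ha.
  have [h1 h2 h3 h4] := hinv a (ltn_ord a) ha.
  split.
  + by rewrite inE /m vi.
  + by rewrite /m -(inj_eq val_inj) /= vi.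
  + by apply: val_inj; rewrite /m /= (@vi t (mn a) h4) h3 (@vi t a (ltn_ord a)).
- move=> u v w h1 h2 h3 e1 e2 e3; rewrite !inE !orbF => n1 n2 n3.
  have nv : forall y : 'I_((2 * t).+3), y != inord x -> nat_of_ord y != x.
    by move=> y hy; apply/eqP=> hyx; move/eqP: hy; apply; apply: val_inj; rewrite /= vi.
  have [a [ha [hin hm]]] := htri u v w h1 h2 h3 (ltn_ord u) (ltn_ord v) (ltn_ord w)
     e1 e2 e3 (nv _ n1) (nv _ n2) (nv _ n3).
  have an : a < (2 * t).+3 by case: hin => [->|[->|->]].
  exists (inord a); split.
  + by rewrite inE vi.
  + by rewrite !inE -!(inj_eq val_inj) /= vi //; case: hin => [->|[->|->]]; rewrite eqxx ?orbT.
  + rewrite !inE -!(inj_eq val_inj) /= /m /= !vi //; last by have [_ _ _ ->] := hinv a an ha.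
    by case: hm => [->|[->|->]]; rewrite eqxx ?orbT.
Qed.

Theorem mainTheorem16 (t : nat) (ht : 2 <= t) : waiter_wins_game (dd_adj t).
Proof.
rewrite /waiter_wins_game.
have h1 : t.+1 < (2 * t).+3 by lia.
have h2 : (2 * t).+1 < (2 * t).+3 by lia.
apply: (@ww_two _ _ set0 set0 (inord t.+1) (inord (2 * t).+1)).
- by rewrite -(inj_eq val_inj) /= !vi //; lia.
- by rewrite !inE.
- by rewrite !inE.
- apply: (@branch_gen t (A1n t) (m1n t)) => //.
  + lia.
  + by move=> a; rewrite /A1n; lia.
  + by move=> a _ ha; apply: inv1.
  + exact: (tri_gen (tri1_sorted ht)).
- apply: (@branch_gen t (A2n t) (m2n t)) => //.
  + lia.
  + by move=> a; rewrite /A2n; lia.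
  + by move=> a _ ha; apply: inv2.
  + exact: (tri_gen (tri2_sorted ht)).
Qed.
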